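(* Let $M$ be a nonzero real symmetric matrix and let $\xi$ be a principal eigenvector of $M$. Then for any $\eta\ne0$ with $M\eta\neq 0$, $$\angle(\eta,M\eta)\le3\,\angle(\eta,\xi).$$
   Context: For nonzero $\xi,\eta\in\mathbb{R}^p$, $\angle(\xi,\eta)=\cos^{-1}\bigl(|\xi^T\eta|/(\|\xi\|_2\|\eta\|_2)\bigr)\in[0,\pi/2]$. A principal eigenvector of a symmetric matrix $M$ is an eigenvector associated with an eigenvalue of largest absolute value, so that $\|M\xi\|_2=\|M\|_2\|\xi\|_2$ where $\|M\|_2$ is the spectral (operator 2-) norm. *)

(* Defs.v *)
From HB Require Import structures.
From mathcomp Require Import all_boot all_order all_algebra.
From mathcomp Require Import reals trigo.
Set Implicit Arguments. Unset Strict Implicit. Unset Printing Implicit Defensive.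
Import Order.TTheory GRing.Theory Num.Theory.
Local Open Scope ring_scope.

Definition dotv (R : realType) (p : nat) (x y : 'cV[R]_p) : R :=
  \sum_(i < p) x i 0 * y i 0.

Definition norm2 (R : realType) (p : nat) (x : 'cV[R]_p) : R :=
  Num.sqrt (dotv x x).

Definition vangle (R : realType) (p : nat) (x y : 'cV[R]_p) : R :=
  acos (`|dotv x y| / (norm2 x * norm2 y)).

Definition is_eigenvalue (R : realType) (p : nat) (M : 'M[R]_p) (mu : R) : Prop :=
  exists v : 'cV[R]_p, v != 0 /\ M *m v = mu *: v.

Definition principal_eigenvector (R : realType) (p : nat) (M : 'M[R]_p)
  (xi : 'cV[R]_p) : Prop :=
  xi != 0 /\ exists lambda : R, M *m xi = lambda *: xi /\
    forall mu : R, is_eigenvalue M mu -> `|mu| <= `|lambda|.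

(* Main.v *)
Require Import Defs.
From HB Require Import structures.
From mathcomp Require Import all_boot all_order all_algebra.
From mathcomp Require Import reals trigo.
From mathcomp Require Import complex spectral sesquilinear.
From mathcomp Require Import ring lra.
Import Order.TTheory GRing.Theory Num.Theory.
Local Open Scope ring_scope.

Lemma dotvE0 (R : realType) (p : nat) (x y : 'cV[R]_p) : dotv x y = (x^T *m y) 0 0.
Proof. by rewrite /dotv mxE; apply: eq_bigr => i _; rewrite mxE. Qed.

Section Key.
Variable R : realType.
Local Notation C := (R[i]).
Local Notation toC := (real_complex R).

Lemma conj_toC (x : R) : (toC x)^* = toC x.
Proof. by apply: conj_Creal; have := complex_real x 0; rewrite eqxx. Qed.

Lemma ReM (a : R) (z : C) : complex.Re (toC a * z) = a * complex.Re z.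
Proof. by case: z => x y /=; rewrite mul0r subr0. Qed.

Lemma ImM (a : R) (z : C) : complex.Im (toC a * z) = a * complex.Im z.
Proof. by case: z => x y /=; rewrite mul0r addr0. Qed.

Lemma ReD (x y : C) : complex.Re (x + y) = complex.Re x + complex.Re y.
Proof. by case: x => a b; case: y => c d. Qed.

Lemma ImD (x y : C) : complex.Im (x + y) = complex.Im x + complex.Im y.
Proof. by case: x => a b; case: y => c d. Qed.

Lemma norm_toC (r : R) : `|toC r| = toC `|r|.
Proof. by rewrite normc_def /= expr0n /= addr0 sqrtr_sqr. Qed.

Lemma Re_sum (n : nat) (F : 'I_n -> C) :
  complex.Re (\sum_(i < n) F i) = \sum_(i < n) complex.Re (F i).
Proof. by apply: (big_morph _ ReD). Qed.

Lemma Im_sum (n : nat) (F : 'I_n -> C) :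
  complex.Im (\sum_(i < n) F i) = \sum_(i < n) complex.Im (F i).
Proof. by apply: (big_morph _ ImD). Qed.

Lemma eig_real (p : nat) (M : 'M[R]_p) (r : R) (u : 'cV[C]_p) : u != 0 ->
  map_mx toC M *m u = toC r *: u -> is_eigenvalue M r.
Proof.
move=> nu hu.
set ur := map_mx (@complex.Re R) u; set ui := map_mx (@complex.Im R) u.
have hr : M *m ur = r *: ur.
  apply/matrixP => j k; have := congr1 (fun m : 'M[C]_(p,1) => complex.Re (m j k)) hu.
  rewrite !mxE Re_sum ReM => <-; apply: eq_bigr => l _.
  by rewrite !mxE ReM.
have hi : M *m ui = r *: ui.
  apply/matrixP => j k; have := congr1 (fun m : 'M[C]_(p,1) => complex.Im (m j k)) hu.
  rewrite !mxE Im_sum ImM => <-; apply: eq_bigr => l _.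
  by rewrite !mxE ImM.
have [ur0|nur] := eqVneq ur 0; last by exists ur.
have [ui0|nui] := eqVneq ui 0; last by exists ui.
move: nu; have -> : u = 0; last by rewrite eqxx.
apply/matrixP => j k.
have := congr1 (fun m : 'M[R]_(p,1) => m j k) ur0; have := congr1 (fun m : 'M[R]_(p,1) => m j k) ui0.
rewrite !mxE; case: (u j k) => a b /= -> ->; by [].
Qed.

Local Open Scope sesquilinear_scope.

Definition ncm {n : nat} (w : 'cV[C]_n) := (w^t* *m w) 0 0.

Lemma ncmE (n : nat) (w : 'cV[C]_n) : ncm w = \sum_k (w k 0)^* * w k 0.
Proof. by rewrite /ncm mxE; apply: eq_bigr => k _; rewrite !mxE. Qed.

Lemma tc_map (m n : nat) (w : 'M[R]_(m, n)) : (map_mx toC w)^t* = map_mx toC w^T.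
Proof. by apply/matrixP => i j; rewrite !mxE conj_toC. Qed.

Lemma ncm_toC (n : nat) (w : 'cV[R]_n) : ncm (map_mx toC w) = toC (dotv w w).
Proof. by rewrite /ncm tc_map -map_mxM mxE dotvE0. Qed.

Lemma key_lemma (p : nat) (M : 'M[R]_p) (lambda : R) : M^T = M ->
  (forall mu : R, is_eigenvalue M mu -> `|mu| <= `|lambda|) ->
  forall v, dotv (M *m v) (M *m v) <= lambda ^+ 2 * dotv v v.
Proof.
move=> sM hp v.
set A := map_mx toC M.
have At : A^t* = A.
  by rewrite /A tc_map sM.
have nA : A \is normalmx by apply/normalmxP; rewrite At.
have hA : A = invmx (spectralmx A) *m diag_mx (spectral_diag A) *m spectralmx A.
  exact/orthomx_spectralP.
have hermA : A \is hermsymmx by apply/is_hermitianmxP; rewrite expr0 scale1r At.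
have dreal := hermitian_spectral_diag_real hermA.
set P := spectralmx A in hA; set d := spectral_diag A in hA dreal.
have Pu : P \is unitarymx := spectral_unitarymx A.
have iP : invmx P = P^t* := invmx_unitary Pu.
have PPt : P *m P^t* = 1%:M by apply/unitarymxP.
have PtP : P^t* *m P = 1%:M by rewrite -iP mulVmx // spectral_unit.
have hd : forall i, `|d 0 i| <= toC `|lambda|.
  move=> i.
  have dr : d 0 i \is Num.real by move/mxOverP: dreal; apply.
  set r := complex.Re (d 0 i).
  have dE : d 0 i = toC r by rewrite /r RRe_real.
  rewrite dE norm_toC lecR; apply: hp.
  have PA : P *m A = diag_mx d *m P by rewrite {1}hA iP !mulmxA PPt mul1mx.
  have AT : A^T = A by rewrite /A map_trmx sM.
  apply: (@eig_real _ M r (row i P)^T).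
    rewrite trmx_eq0; apply/negP => /eqP r0.
    have := congr1 (fun m : 'M[C]_p => m i i) PPt.
    rewrite !mxE eqxx /= big1 => [/eqP|k _]; first by rewrite eq_sym oner_eq0.
    have := congr1 (fun m : 'M[C]_(1,p) => m 0 k) r0.
    by rewrite !mxE => ->; rewrite mul0r.
  rewrite -/A -AT -trmx_mul -row_mul PA -dE.
  by apply/matrixP => j k; rewrite mul_diag_mx !mxE.
set vc := map_mx toC v; set y := P *m vc.
have vcE : vc = P^t* *m y by rewrite /y mulmxA PtP mul1mx.
have AvE : A *m vc = P^t* *m (diag_mx d *m y) by rewrite {1}hA iP !mulmxA.
have nU : forall w : 'cV[C]_p, ncm (P^t* *m w) = ncm w.
  move=> w; rewrite /ncm trmx_mul map_mxM trmxCK mulmxA -(mulmxA _ P) PPt mulmx1.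
  by [].
rewrite -lecR rmorphM /= -!ncm_toC map_mxM -/A -/vc AvE nU vcE nU.
rewrite !ncmE mulr_sumr; apply: ler_sum => k _.
rewrite mul_diag_mx !mxE rmorphXn /= -normCKC -normCKC normrM exprMn.
apply: ler_wpM2r; first exact: exprn_ge0 (normr_ge0 _).
have e : lambda%:C%C ^+ 2 = (`|lambda|%:C%C) ^+ 2.
  by rewrite -!rmorphXn /= -normrX ger0_norm ?sqr_ge0.
rewrite e !expr2; apply: ler_pM; rewrite ?normr_ge0 ?hd //.
Qed.

End Key.

Section Dot.
Variables (R : realType) (p : nat).
Implicit Types (x y z : 'cV[R]_p).

Lemma dotvE x y : dotv x y = (x^T *m y) 0 0.
Proof. by rewrite /dotv mxE; apply: eq_bigr => i _; rewrite mxE. Qed.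

Lemma dotvC x y : dotv x y = dotv y x.
Proof. by apply: eq_bigr => i _; rewrite mulrC. Qed.

Lemma dotvDl x y z : dotv (x + y) z = dotv x z + dotv y z.
Proof. by rewrite /dotv -big_split; apply: eq_bigr => i _; rewrite mxE mulrDl. Qed.

Lemma dotvZl a x y : dotv (a *: x) y = a * dotv x y.
Proof. by rewrite /dotv mulr_sumr; apply: eq_bigr => i _; rewrite mxE mulrA. Qed.

Lemma dotvDr x y z : dotv x (y + z) = dotv x y + dotv x z.
Proof. by rewrite dotvC dotvDl !(dotvC x). Qed.

Lemma dotvZr a x y : dotv x (a *: y) = a * dotv x y.
Proof. by rewrite dotvC dotvZl dotvC. Qed.

Lemma dotvNl x y : dotv (- x) y = - dotv x y.
Proof. by rewrite -scaleN1r dotvZl mulN1r. Qed.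

Lemma dotvNr x y : dotv x (- y) = - dotv x y.
Proof. by rewrite dotvC dotvNl dotvC. Qed.

Lemma dotv0r x : dotv x 0 = 0.
Proof. by rewrite -(scale0r 0) dotvZr mul0r. Qed.

Lemma dotv_ge0 x : 0 <= dotv x x.
Proof. by apply: sumr_ge0 => i _; rewrite -expr2 sqr_ge0. Qed.

Lemma dotv_eq0 x : dotv x x = 0 -> x = 0.
Proof.
move=> /eqP; rewrite psumr_eq0 => [/allP H|i _]; last by rewrite -expr2 sqr_ge0.
apply/matrixP => i j; rewrite ord1 mxE.
by have /(_ (mem_index_enum i)) := H i; rewrite implyTb mulf_eq0 orbb => /eqP.
Qed.

Lemma dotv_gt0 x : x != 0 -> 0 < dotv x x.
Proof.
move=> nx; rewrite lt_def dotv_ge0 andbT; apply/eqP => /dotv_eq0 h.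
by rewrite h eqxx in nx.
Qed.

Lemma dotv_mul (A : 'M[R]_p) x y : dotv x (A *m y) = dotv (A^T *m x) y.
Proof. by rewrite !dotvE trmx_mul trmxK mulmxA. Qed.

Lemma norm2_sq x : norm2 x ^+ 2 = dotv x x.
Proof. by rewrite /norm2 sqr_sqrtr // dotv_ge0. Qed.

Lemma norm2_ge0 x : 0 <= norm2 x.
Proof. exact: sqrtr_ge0. Qed.

Lemma CS2 x y : dotv x y ^+ 2 <= dotv x x * dotv y y.
Proof.
have [y0|ny] := eqVneq y 0.
  by rewrite y0 !dotv0r expr2 !mulr0.
have hy := dotv_gt0 _ ny.
set z := dotv y y *: x - dotv x y *: y.
have := dotv_ge0 z.
rewrite /z !(dotvDl, dotvDr, dotvNl, dotvNr, dotvZl, dotvZr) (dotvC y x).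
move=> h.
have h2 : 0 <= dotv y y * (dotv y y * dotv x x - dotv x y ^+ 2).
  by move: h; congr (_ <= _); ring.
rewrite pmulr_rge0 // subr_ge0 in h2.
by rewrite mulrC.
Qed.

Lemma CS x y : `|dotv x y| <= norm2 x * norm2 y.
Proof.
rewrite /norm2 -sqrtrM ?dotv_ge0 // -sqrtr_sqr ler_sqrt ?CS2 //.
by rewrite mulr_ge0 ?dotv_ge0.
Qed.


Lemma key (M : 'M[R]_p) (lambda : R) : M^T = M ->
  (forall mu : R, is_eigenvalue M mu -> `|mu| <= `|lambda|) ->
  forall v, dotv (M *m v) (M *m v) <= lambda ^+ 2 * dotv v v.
Proof. exact: key_lemma. Qed.

Lemma normM (M : 'M[R]_p) (lambda : R) : M^T = M ->
  (forall mu : R, is_eigenvalue M mu -> `|mu| <= `|lambda|) ->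
  forall v, norm2 (M *m v) <= `|lambda| * norm2 v.
Proof.
move=> sM hp v; have h := key _ _ sM hp v.
rewrite /norm2 -(sqrtr_sqr lambda) -sqrtrM ?sqr_ge0 // ler_sqrt //.
by rewrite mulr_ge0 ?sqr_ge0 ?dotv_ge0.
Qed.

Lemma main_ineq (M : 'M[R]_p) (xi eta : 'cV[R]_p) (lambda : R) :
  M^T = M -> xi != 0 -> M *m xi = lambda *: xi ->
  (forall mu : R, is_eigenvalue M mu -> `|mu| <= `|lambda|) ->
  eta != 0 -> M *m eta != 0 ->
  2 * (`|dotv eta xi| / (norm2 eta * norm2 xi)) ^+ 2 - 1 <=
  `|dotv eta (M *m eta)| / (norm2 eta * norm2 (M *m eta)).
Proof.
move=> sM nxi exi hp neta nMeta.
set X := dotv xi xi; set s := dotv eta xi; set E := dotv eta eta.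
set q := dotv eta (M *m eta); set L := `|lambda|.
have X0 : 0 < X := dotv_gt0 _ nxi.
have E0 : 0 < E := dotv_gt0 _ neta.
set w := X *: eta - s *: xi.
have wxi : dotv w xi = 0.
  by rewrite /w dotvDl dotvNl !dotvZl -/X -/s mulrC subrr.
have xiMw : dotv xi (M *m w) = 0.
  by rewrite dotv_mul sM exi dotvZl dotvC wxi mulr0.
have Mw : M *m w = X *: (M *m eta) - s *: (M *m xi).
  by rewrite /w mulmxBr !scalemxAr.
have hq : X ^+ 2 * q = dotv w (M *m w) + s ^+ 2 * lambda * X.
  have -> : dotv w (M *m w) = dotv (X *: eta - s *: xi) (X *: (M *m eta) - s *: (lambda *: xi)).
    by rewrite Mw exi.
  rewrite !(dotvDl, dotvDr, dotvNl, dotvNr, dotvZl, dotvZr) -/X -/s -/q.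
  have -> : dotv xi (M *m eta) = lambda * s.
    by rewrite dotv_mul sM exi dotvZl dotvC.
  ring.
have ww : dotv w w = X ^+ 2 * E - X * s ^+ 2.
  rewrite /w !(dotvDl, dotvDr, dotvNl, dotvNr, dotvZl, dotvZr) -/X -/s -/E (dotvC xi eta) -/s.
  ring.
have hw : `|dotv w (M *m w)| <= L * dotv w w.
  apply: (le_trans (CS _ _)).
  rewrite -norm2_sq expr2 mulrCA; apply: ler_wpM2l; first exact: norm2_ge0.
  exact: (normM _ _ sM hp).
have L0 : 0 <= L := normr_ge0 _.
have hq2 : L * (2 * s ^+ 2 - X * E) <= X * `|q|.
  have h1 : X ^+ 2 * `|q| >= `|s ^+ 2 * lambda * X| - `|dotv w (M *m w)|.
    rewrite -(@ger0_norm _ (X ^+ 2)) ?sqr_ge0 // -normrM hq.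
    by apply: (le_trans (lerB_normD _ _)); rewrite addrC.
  have h2 : `|s ^+ 2 * lambda * X| = s ^+ 2 * L * X.
    have ss : `|s| * `|s| = s ^+ 2 by rewrite -normrM -expr2 ger0_norm ?sqr_ge0.
    by rewrite !normrM (ger0_norm (ltW X0)) ss.
  rewrite h2 ww in h1 hw.
  have h3 : X * (L * (2 * s ^+ 2 - X * E)) <= X * (X * `|q|).
    apply: (le_trans _ (le_trans h1 _)); last by rewrite mulrA -expr2.
    move: hw; rewrite -lerN2 => hw.
    apply: (le_trans _ (lerD (lexx _) hw)); rewrite le_eqVlt; apply/orP; left; apply/eqP; ring.
  by rewrite ler_pM2l in h3.
set a := norm2 eta; set b := norm2 (M *m eta); set c := norm2 xi.
have a2 : a ^+ 2 = E by apply: norm2_sq.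
have c2 : c ^+ 2 = X by apply: norm2_sq.
have a0 : 0 < a by rewrite /a /norm2 sqrtr_gt0.
have c0 : 0 < c by rewrite /c /norm2 sqrtr_gt0.
have b0 : 0 < b by rewrite /b /norm2 sqrtr_gt0 dotv_gt0.
have bL : b <= L * a by apply: (normM _ _ sM hp).
have ns : `|s| ^+ 2 = s ^+ 2 by rewrite -normrX ger0_norm ?sqr_ge0.
rewrite expr_div_n ns exprMn a2 c2.
set t := s ^+ 2 / (E * X); set r := `|q| / (a * b).
have EX0 : 0 < E * X by rewrite mulr_gt0.
have ht : t * (E * X) = s ^+ 2 by rewrite /t divfK // gt_eqF.
have hr : r * (a * b) = `|q| by rewrite /r divfK // gt_eqF // mulr_gt0.
have r0 : 0 <= r by rewrite /r divr_ge0 ?normr_ge0 // mulr_ge0 // ltW.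
have Lp : 0 < L.
  have : 0 < L * a by apply: lt_le_trans bL.
  by rewrite pmulr_lgt0.
have hk : (2 * t - 1) * (L * (E * X)) <= r * (L * (E * X)).
  have -> : (2 * t - 1) * (L * (E * X)) = L * (2 * s ^+ 2 - X * E).
    by rewrite -ht; ring.
  apply: (le_trans hq2); rewrite -hr.
  have -> : r * (L * (E * X)) = X * r * a * (L * a) by rewrite -a2; ring.
  have -> : X * (r * (a * b)) = X * r * a * b by ring.
  apply: ler_wpM2l => //; apply: mulr_ge0; [apply: mulr_ge0|]; by [apply: ltW|].
by rewrite ler_pM2r ?mulr_gt0 in hk.
Qed.


End Dot.

Lemma angle_lemma (R : realType) (c1 c2 : R) : 0 <= c1 <= 1 -> 0 <= c2 <= 1 ->
  2 * c2^+2 - 1 <= c1 -> acos c1 <= 3 * acos c2.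
Proof.
move=> /andP[c10 c11] /andP[c20 c21] hc.
have hc1 : -1 <= c1 <= 1 by apply/andP; split => //; lra.
have hc2 : -1 <= c2 <= 1 by apply/andP; split => //; lra.
have ct : cos (acos c2) = c2 by apply: acosK; rewrite in_itv /=.
have ca : cos (acos c1) = c1 by apply: acosK; rewrite in_itv /=.
have t0 := acos_ge0 hc2; have tpi := acos_lepi hc2.
have a0 := acos_ge0 hc1; have api := acos_lepi hc1.
have pih : 0 <= pi / 2 :> R by rewrite divr_ge0 // pi_ge0.
have tle : acos c2 <= pi / 2.
  rewrite leNgt; apply/negP => h.
  have : cos (acos c2) < cos (pi / 2).
    rewrite ltr_cos // in_itv /= ?pih ?t0 ?tpi //.
    by rewrite ler_pdivrMr // ler_peMr ?pi_ge0 // ler1n.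
  by rewrite cos_pihalf ct ltNge c20.
have c2t : cos (acos c2 *+ 2) = 2 * c2 ^+ 2 - 1 by rewrite cos_mulr2n ct mulr_natl.
have : acos c1 <= acos c2 *+ 2.
  rewrite leNgt; apply/negP => h.
  have : cos (acos c1) < cos (acos c2 *+ 2).
    rewrite ltr_cos // in_itv /= ?a0 ?api //.
    rewrite mulr2n addr_ge0 //=.
    have -> : pi = pi / 2 + pi / 2 :> R by rewrite -splitr.
    by rewrite lerD.
  by rewrite ca c2t ltNge hc.
rewrite mulr2n => h; lra.
Qed.

Lemma cos_bound (R : realType) (p : nat) (x y : 'cV[R]_p) : x != 0 -> y != 0 ->
  0 <= `|dotv x y| / (norm2 x * norm2 y) <= 1.
Proof.
move=> nx ny.
have hx : 0 < norm2 x by rewrite /norm2 sqrtr_gt0 dotv_gt0.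
have hy : 0 < norm2 y by rewrite /norm2 sqrtr_gt0 dotv_gt0.
apply/andP; split; first by rewrite divr_ge0 ?normr_ge0 ?mulr_ge0 ?ltW.
by rewrite ler_pdivrMr ?mulr_gt0 // mul1r CS.
Qed.

Theorem lemma1 (R : realType) (p : nat) (M : 'M[R]_p) (xi eta : 'cV[R]_p) :
  M^T = M -> M != 0 -> principal_eigenvector M xi ->
  eta != 0 -> M *m eta != 0 ->
  vangle eta (M *m eta) <= 3 * vangle eta xi.
Proof.
move=> sM _ [nxi [lambda [exi hp]]] neta nMeta.
rewrite /vangle; apply: angle_lemma.
- exact: cos_bound.
- exact: cos_bound.
- exact: (@main_ineq _ _ _ _ _ _ sM nxi exi hp neta nMeta).
Qed.
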